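(* Let $X$ be the Cantor set, $\alpha$ a minimal homeomorphism of $X$, and $\phi:X\to\operatorname{Isom}(\mathbb{T})$ continuous such that $\alpha\times\phi$ is minimal and not orientation preserving. Let $x_0\in X$ and let $\mathcal P=\{X(v,k):v\in V,\ k=1,\dots,h(v)\}$ be a Kakutani–Rohlin partition for $(X,\alpha)$ such that $x_0\in R(\mathcal P)$ and $o(\phi)$ is constant on each clopen set of $\widetilde{\mathcal P}$. Then $h_\phi$ is equivalent to $\sum_{v\in V,\ o(\phi)_v=1}1_{X(v,h(v))}$ in $K_1(A_{x_0})$.
   Context: $\alpha\times\phi:(x,t)\mapsto(\alpha(x),\phi_x(t))$; $o(\phi)(x)=0$ if $\phi_x$ preserves orientation and $1$ otherwise; $\alpha\times\phi$ is orientation preserving iff $o(\phi)\in\{f-f\circ\alpha^{-1}:f\in C(X,\mathbb{Z}_2)\}$. Define the automorphism $\alpha_\phi^*$ of $C(X,\mathbb{Z})$ by $\alpha_\phi^*(f)(x)=(-1)^{o(\phi)(\alpha^{-1}(x))}f(\alpha^{-1}(x))$ (this is the map induced by $\alpha\times\phi$ on $K_1(C(X\times\mathbb{T}))\cong C(X,\mathbb{Z})$). With $A_{x_0}$ the $C^*$-subalgebra of $C^*(X\times\mathbb{T},\alpha\times\phi)$ generated by $C(X\times\mathbb{T})$ and $uC_0((X\setminus\{x_0\})\times\mathbb{T})$, $K_1(A_{x_0})$ is identified with $C(X,\mathbb{Z})/\{f-\alpha_\phi^*(f):f\in C(X,\mathbb{Z}),f(x_0)=0\}$; ''$f$ is equivalent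 to $g$ in $K_1(A_{x_0})$'' means $f-g$ lies in that subgroup. $h_\phi\in C(X,\mathbb{Z})$ is $h_\phi(x)=1$ if $o(\phi)(\alpha^{-1}(x))=1$ and $0$ otherwise. A Kakutani–Rohlin partition is a clopen partition $\{X(v,k)\}$ with $\alpha(X(v,k))=X(v,k+1)$ for $k<h(v)$ and $\alpha(\bigcup_vX(v,h(v)))=\bigcup_vX(v,1)$; $R(\mathcal P)=\bigcup_vX(v,h(v))$ is the roof set, $\widetilde{\mathcal P}=\{X(v,k):k<h(v)\}\cup\{R(\mathcal P)\}$, and $o(\phi)_v=\sum_{i=0}^{h(v)-1}o(\phi)(\alpha^i(x))\in\mathbb{Z}_2$ for any $x\in X(v,1)$. *)

(* Defs.v *)
From HB Require Import structures.
From mathcomp Require Import all_boot all_order all_algebra.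
From mathcomp Require Import all_classical all_reals all_analysis.
Set Implicit Arguments. Unset Strict Implicit. Unset Printing Implicit Defensive.
Import Order.TTheory GRing.Theory Num.Theory numFieldNormedType.Exports.
Local Open Scope classical_set_scope.
Local Open Scope ring_scope.

(* X = the Cantor set: we use the concrete Cantor space bool^nat of
   mathcomp-analysis (cantor.v). *)
Notation X := cantor_space.

Definition minimal_map (T : topologicalType) (f : T -> T) : Prop :=
  forall A : set T, closed A -> f @` A `<=` A -> A = set0 \/ A = setT.

Definition locally_constant (T : topologicalType) (U : Type) (f : T -> U) :=
  forall x : T, \forall y \near x, f y = f x.

(* The circle T = R/Z is represented by real numbers taken modulo 1.
   An isometry of T is t |-> t + th (orientation preserving) or
   t |-> -t + th (orientation reversing).  A map phi : X -> Isom(T) is thus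
   given by  o : X -> bool  (o x = true iff phi_x reverses orientation,
   i.e. o = o(phi))  and  th : X -> R  (taken mod 1). *)
Definition isomT (R : realType) (o : bool) (th t : R) : R :=
  (if o then - t else t) + th.

Definition continuous_mod1 (R : realType) (th : X -> R) : Prop :=
  forall (x : X) (e : R), 0 < e ->
    \forall y \near x, exists k : int, `|th y - th x - k%:~R| < e.

(* Continuity of phi : X -> Isom(T) (topology of uniform convergence,
   Isom(T) = Z/2 x T as a topological space). *)
Definition continuous_phi (R : realType) (o : X -> bool) (th : X -> R) :=
  locally_constant o /\ continuous_mod1 th.

(* The skew product alpha x phi on X x R (lifting X x T). *)
Definition skew (R : realType) (a : X -> X) (o : X -> bool) (th : X -> R)
  (p : X * R) : X * R :=
  (a p.1, isomT (o p.1) (th p.1) p.2).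

(* Minimality of alpha x phi on X x T: closed subsets of X x T are the
   closed Z-periodic (in the second coordinate) subsets of X x R. *)
Definition skew_minimal (R : realType) (a : X -> X) (o : X -> bool)
  (th : X -> R) : Prop :=
  forall A : set (X * R), closed A ->
    (forall x t, A (x, t) -> A (x, t + 1) /\ A (x, t - 1)) ->
    skew a o th @` A `<=` A -> A = set0 \/ A = setT.

(* alpha x phi is orientation preserving iff
   o(phi) \in { f - f o alpha^{-1} : f \in C(X, Z_2) }. *)
Definition orientation_preserving (ai : X -> X) (o : X -> bool) : Prop :=
  exists f : X -> bool, locally_constant f /\ forall x, o x = f x (+) f (ai x).

Definition roof (V : finType) (h : V -> nat) (P : V -> nat -> set X) : set X :=
  [set x | exists v, P v (h v) x].
Definition base (V : finType) (P : V -> nat -> set X) : set X :=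
  [set x | exists v, P v 1%N x].

Definition KR_partition (a : X -> X) (V : finType) (h : V -> nat)
  (P : V -> nat -> set X) : Prop :=
  (forall v, (0 < h v)%N) /\
  [/\
      (forall v k, (1 <= k <= h v)%N -> open (P v k) /\ closed (P v k)
                                         /\ P v k !=set0),
      (forall x, exists v k, (1 <= k <= h v)%N /\ P v k x),
      (forall v k v' k' x, (1 <= k <= h v)%N -> (1 <= k' <= h v')%N ->
          P v k x -> P v' k' x -> v = v' /\ k = k'),
      (forall v k, (1 <= k < h v)%N -> a @` P v k = P v k.+1) &
      a @` roof h P = base P].

Definition o_const_on_tildeP (V : finType) (h : V -> nat)
  (P : V -> nat -> set X) (o : X -> bool) : Prop :=
  (forall v k x y, (1 <= k < h v)%N -> P v k x -> P v k y -> o x = o y) /\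
  (forall x y, roof h P x -> roof h P y -> o x = o y).

Definition ov_one (a : X -> X) (V : finType) (h : V -> nat)
  (P : V -> nat -> set X) (o : X -> bool) (v : V) : Prop :=
  exists x, P v 1%N x /\ odd (\sum_(i < h v) o (iter i a x)).

Definition h_phi (ai : X -> X) (o : X -> bool) (x : X) : int :=
  (o (ai x) : nat)%:Z.

Definition alpha_star (ai : X -> X) (o : X -> bool) (f : X -> int) (x : X)
  : int := (-1) ^+ (o (ai x) : nat) * f (ai x).

(* f ~ g in K_1(A_{x0}) = C(X,Z) / {f - alpha_phi^* f : f in C(X,Z), f x0 = 0}. *)
Definition K1_equiv (ai : X -> X) (o : X -> bool) (x0 : X) (f g : X -> int)
  : Prop :=
  exists u : X -> int, locally_constant u /\ u x0 = 0 /\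
    forall x, f x - g x = u x - alpha_star ai o u x.

(* Main.v *)
Require Import Defs.
From HB Require Import structures.
From mathcomp Require Import all_boot all_order all_algebra.
From mathcomp Require Import all_classical all_reals all_analysis.
From mathcomp Require Import zify ring.
Import Order.TTheory GRing.Theory Num.Theory numFieldNormedType.Exports.
Local Open Scope classical_set_scope.
Local Open Scope ring_scope.
Theorem lemma6p2 (R : realType) (a ai : X -> X) (o : X -> bool) (th : X -> R)
  (V : finType) (h : V -> nat) (P : V -> nat -> set X) (x0 : X) :
  continuous a -> continuous ai -> cancel a ai -> cancel ai a ->
  minimal_map a ->
  continuous_phi o th ->
  skew_minimal a o th ->
  ~ orientation_preserving ai o ->
  KR_partition a h P ->
  roof h P x0 ->
  o_const_on_tildeP h P o ->
  K1_equiv ai o x0 (h_phi ai o)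
    (fun x => \sum_(v : V | `[< ov_one a h P o v >]) \1_(P v (h v)) x).
Proof.
move=> _ _ aK aiK _ _ _ _ [hpos [Pclo Pcov Puniq Pimg Proof]] x0roof [oc oroof].
set r := o x0.
have up : forall v k x, (1 <= k < h v)%N -> P v k x -> P v k.+1 (a x).
  by move=> v k x hk Px; rewrite -Pimg //; exists x.
have down : forall v k y, (1 < k <= h v)%N -> P v k y -> P v k.-1 (ai y).
  move=> v k y hk Py.
  have : P v k.-1.+1 y by rewrite prednK //; lia.
  rewrite -Pimg; last by lia.
  by case=> z Pz <-; rewrite aK.
have T1 : forall v x i, P v 1%N x -> (i < h v)%N -> P v i.+1 (iter i a x).
  move=> v x; elim=> [|i IH] Px hi //=.
  apply: up; first by lia.
  by apply: IH => //; lia.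
have T2 : forall v k y i, (1 <= k <= h v)%N -> P v k y -> (i < k)%N ->
    P v (k - i)%N (iter i ai y).
  move=> v k y; elim=> [|i IH] hk Py hi; first by rewrite subn0.
  rewrite /=.
  have -> : (k - i.+1 = (k - i).-1)%N by lia.
  apply: down; first by lia.
  by apply: IH => //; lia.
have itK : forall i y, iter i a (iter i ai y) = y.
  by elim=> [|i IH] y //; rewrite iterSr [iter i.+1 ai y]iterS aiK IH.
have itK' : forall i y, iter i ai (iter i a y) = y.
  by elim=> [|i IH] y //; rewrite iterSr [iter i.+1 a y]iterS aK IH.
have bsplit : forall n (F : nat -> nat), (0 < n)%N -> \sum_(i < n) F i = \sum_(i < n.-1) F i + F n.-1.
  by move=> n F; case: n => // n _; rewrite big_ord_recr.
pose T y k := \sum_(i < k.-1) (o (iter i a (iter k.-1 ai y)) : nat).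
have base1 : forall v k y, (1 <= k <= h v)%N -> P v k y ->
    P v 1%N (iter k.-1 ai y).
  move=> v k y hk Py.
  have := T2 v k y k.-1 hk Py; rewrite (_ : (k - k.-1 = 1)%N); last by lia.
  by apply; lia.
have Sconst : forall v k y y', (1 <= k <= h v)%N -> P v k y -> P v k y' ->
    T y k = T y' k.
  move=> v k y y' hk Py Py'; apply: eq_bigr => i _; congr nat_of_bool.
  apply: (oc v i.+1); first by have := ltn_ord i; lia.
    by apply: T1; [exact: base1 hk Py | have := ltn_ord i; lia].
  by apply: T1; [exact: base1 hk Py' | have := ltn_ord i; lia].
pose W x := `[< exists v k, (1 <= k <= h v)%N /\ P v k x /\ odd (r + T x k) >].
have Wlev : forall v k x, (1 <= k <= h v)%N -> P v k x -> W x = odd (r + T x k).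
  move=> v k x hk Px; rewrite /W.
  case: asboolP => [[v' [k' [hk' [Px' od]]]]|nW].
    by have [_ ek] := Puniq _ _ _ _ _ hk' hk Px' Px; rewrite -ek od.
  apply/esym/negbTE/negP => od; apply: nW; by exists v, k.
pose g x := \sum_(v : V | `[< ov_one a h P o v >]) (\1_(P v (h v)) x : int).
have glev : forall v k x, (1 <= k <= h v)%N -> P v k x ->
    g x = (((k == h v) && `[< ov_one a h P o v >] : bool) : nat)%:Z.
  move=> v k x hk Px; rewrite /g.
  rewrite (eq_bigr (fun v' => (((v' == v) && (k == h v) : bool) : nat)%:Z)); last first.
    move=> v' _; rewrite indicE natz; congr (Posz (nat_of_bool _)).
    apply/idP/idP.
      rewrite in_setE => Px'.
      have hv' : (1 <= h v' <= h v')%N by have := hpos v'; lia.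
      by have [-> ->] := Puniq _ _ _ _ _ hv' hk Px' Px; rewrite !eqxx.
    by case/andP => /eqP -> /eqP <-; rewrite in_setE.
  case: (boolP `[< ov_one a h P o v >]) => ov.
    rewrite (bigD1 v) //= big1 ?addr0; first by rewrite eqxx andbT.
    by move=> v' /andP[_ /negbTE ->].
  rewrite andbF big1 //= => v' ov'.
  by case: eqP => //= ev; rewrite -ev ov' in ov.
have ovlev : forall v z, P v (h v) z -> `[< ov_one a h P o v >] = odd (r + T z (h v)).
  move=> v z Pz.
  have hv : (1 <= h v <= h v)%N by have := hpos v; lia.
  have hS : (h v = (h v).-1.+1)%N by have := hpos v; lia.
  apply/idP/idP.
    move/asboolP => [x' [Px' od]].
    have Pz' : P v (h v) (iter (h v).-1 a x') by rewrite {1}hS; apply: T1 => //; lia.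
    rewrite (Sconst _ _ _ _ hv Pz Pz') /T itK' addnC.
    move: od; rewrite (bsplit (h v) (fun i => o (iter i a x'))) ?hpos //.
    by rewrite (oroof _ x0) //; exists v.
  move=> od; apply/asboolP; exists (iter (h v).-1 ai z); split; first exact: base1 hv Pz.
  rewrite (bsplit (h v) (fun i => o (iter i a _))) ?hpos // itK (oroof z x0); last by [].
    by rewrite addrC; exact: od.
  by exists v.
pose u x := ((W x : nat)%:Z - g x).
have uroof : forall x, roof h P x -> u x = 0.
  move=> x [v Px].
  have hv : (1 <= h v <= h v)%N by have := hpos v; lia.
  by rewrite /u (Wlev _ _ _ hv Px) (glev _ _ _ hv Px) eqxx /= (ovlev _ _ Px) subrr.
exists u; split; last split.
- move=> x; have [v [k [hk Px]]] := Pcov x.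
  have [Po _] := Pclo v k hk.
  apply: (filterS _ (open_nbhs_nbhs (conj Po Px))) => y Py.
  rewrite /u (Wlev _ _ _ hk Px) (Wlev _ _ _ hk Py) (glev _ _ _ hk Px) (glev _ _ _ hk Py).
  by rewrite (Sconst _ _ _ _ hk Px Py).
- exact: uroof.
- move=> y; rewrite /h_phi /alpha_star -/(g y).
  have key : forall (b c : bool) (G:int), (b:nat)%:Z - G = ((c (+) b) : nat)%:Z - G - (-1)^+(b:nat) * ((c:nat)%:Z - 0).
    by case; case => G /=; rewrite ?expr0 ?expr1; lia.
  have [v [k [hk Py]]] := Pcov y.
  have [k1|k2] : (k = 1)%N \/ (1 < k)%N by lia.
    subst k.
    have : base P y by exists v.
    rewrite -Proof => -[z zr ezy].
    have -> : ai y = z by rewrite -ezy aK.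
    rewrite (uroof z zr) mulr0 subr0 /u (Wlev _ _ _ hk Py) /T /= big_ord0 addn0 oddb.
    by rewrite (oroof z x0).
  have hk' : (1 <= k.-1 <= h v)%N by lia.
  have Pay := down v k y (ltac:(lia)) Py.
  rewrite /u (Wlev _ _ _ hk Py) (Wlev _ _ _ hk' Pay) (glev _ _ _ hk' Pay).
  have -> : (k.-1 == h v) = false by apply/negbTE; lia.
  rewrite /=.
  have -> : T y k = (T (ai y) k.-1 + o (ai y))%N.
    rewrite /T.
    have e : iter k.-1 ai y = iter k.-2 ai (ai y).
      by rewrite -iterSr; congr iter; lia.
    rewrite (bsplit k.-1 (fun i => o (iter i a (iter k.-1 ai y)))); last by lia.
    by rewrite e itK.
  by rewrite addnA oddD oddb -key.
Qed.
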